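(* Let $n\ge 6$ and let $G$ be a graph on $2n$ vertices with at least $n^2-1$ edges that contains no two distinct vertices of the same degree joined by a path of length three. Let $\beta$ be the largest integer such that $G$ contains two distinct vertices of degree $\beta$, and let $\Delta$ be the maximum degree of $G$. Then either $\beta\ge\Delta-1$ or $\Delta\le n+2$.
   Context: A path of length three joining vertices $a$ and $b$ is a path $a\,x\,y\,b$ with four distinct vertices and three edges. Graphs are finite and simple. *)

(* Defs.v *)
From mathcomp Require Import all_boot.
Set Implicit Arguments. Unset Strict Implicit. Unset Printing Implicit Defensive.

Definition simple_graph (T : finType) (e : rel T) : Prop :=
  symmetric e /\ irreflexive e.

Definition deg (T : finType) (e : rel T) (x : T) : nat := #|[set y | e x y]|.

Definition edge_set (T : finType) (e : rel T) : {set {set T}} :=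
  [set s : {set T} | [exists x, exists y, e x y && (s == [set x; y])]].

Definition num_edges (T : finType) (e : rel T) : nat := #|edge_set e|.

Definition path3 (T : finType) (e : rel T) (a b : T) : Prop :=
  exists x y : T, uniq [:: a; x; y; b] /\ e a x /\ e x y /\ e y b.

Definition max_deg (T : finType) (e : rel T) : nat := \max_(x : T) deg e x.

Definition repeated_deg (T : finType) (e : rel T) (d : nat) : Prop :=
  exists u v : T, u != v /\ deg e u = d /\ deg e v = d.

(* Main.v *)
Require Import Defs.
From mathcomp Require Import all_boot zify.

Lemma sumn_uniq_bound r (s : seq nat) :
  uniq s -> all (fun x => x <= r) s -> 2 * sumn s <= r * r.+1.
Proof.
elim: r s => [|r IH] s us als.
  have -> : sumn s = 0.
    elim: s us als => //= x s IHs /andP[_ u] /andP[hx a].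
    by rewrite IHs //; lia.
  by [].
case: (boolP (r.+1 \in s)) => hin.
  rewrite (perm_sumn (perm_to_rem hin)) /=.
  have := IH (rem r.+1 s) (rem_uniq _ us).
  have -> : all (fun x => x <= r) (rem r.+1 s).
    apply/allP => x; rewrite (mem_rem_uniq _ us) inE => /andP[xr xs].
    move/allP: als => /(_ x xs); lia.
  move=> /(_ isT); lia.
have := IH s us.
have -> : all (fun x => x <= r) s.
  apply/allP => x xs; move/allP: als => /(_ x xs).
  have : x != r.+1 by apply: contraNneq hin => <-.
  lia.
move=> /(_ isT); lia.
Qed.
Lemma handshake (T : finType) (e : rel T) :
  simple_graph e -> 2 * num_edges e <= \sum_x deg e x.
Proof.
move=> [sym irr].
rewrite /num_edges.
have -> : 2 * #|edge_set e| = \sum_(s in edge_set e) #|s|.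
  rewrite -sum1_card big_distrr /=; apply: eq_bigr => s.
  rewrite /edge_set inE => /existsP[x /existsP[y /andP[exy /eqP ->]]].
  rewrite cards2 muln1; case: eqP => // xy; by rewrite xy irr in exy.
have -> : \sum_(s in edge_set e) #|s| = \sum_(s in edge_set e) \sum_x (x \in s : nat).
  by apply: eq_bigr => s _; rewrite -sum1_card big_mkcond.
rewrite exchange_big /=; apply: leq_sum => x _.
rewrite -big_mkcondr /= sum1_card.
apply: leq_trans (leq_imset_card (fun y => [set x; y]) [set y | e x y]).
apply: subset_leq_card; apply/subsetP => s /=; rewrite unfold_in /edge_set inE => /andP[].
move=> /existsP[a /existsP[b /andP[eab /eqP ->]]].
rewrite !inE => /orP[] /eqP ->.
  by apply/imsetP; exists b; rewrite ?inE.
by apply/imsetP; exists a; [rewrite inE sym | rewrite setUC].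
Qed.
Lemma arith {n D w l L X SW SM E beta Nn : nat} :
  5 < n -> n ^ 2 - 1 <= E -> 2 * E <= D + SW + SM ->
  SW <= w * L + X -> 2 * X <= (D - 1 - L) * (D - 1 - L).+1 ->
  SM <= l * beta -> l <= Nn - 1 -> w + l = 2 * n - 1 -> L = Nn + 1 ->
  Nn = 2 * n - D -> beta < D - 1 -> n + 2 < D -> D <= 2 * n - 1 -> False.
Proof.
move=> h1 h2 h3 h4 h5 h6 h7 h8 h9 h10 h11 h12 h13.
have h6' : SM <= l * (D - 2) by apply: leq_trans h6 _; rewrite leq_mul2l; lia.
have [k hk] : exists k, D = n + 3 + k by exists (D - n - 3); lia.
have [p hp] : exists p, n = 4 + k + l + p by exists (n - 4 - k - l); lia.
have hD : D = 7 + 2 * k + l + p by lia.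
have hw : w = 7 + 2 * k + l + 2 * p by lia.
have hL : L = 2 + l + p by lia.
have hr : D - 1 - L = 4 + 2 * k by lia.
have hD2 : D - 2 = 5 + 2 * k + l + p by lia.
rewrite hr in h5; rewrite hD2 in h6'; rewrite hw hL in h4.
rewrite expnS expn1 hp in h2.
rewrite hD in h3.
clear -h2 h3 h4 h5 h6' h1 hp.
nia.
Qed.
Theorem lemma3p3 (n : nat) (T : finType) (e : rel T) (beta : nat) :
  6 <= n ->
  simple_graph e ->
  #|T| = 2 * n ->
  n ^ 2 - 1 <= num_edges e ->
  (forall a b : T, a != b -> deg e a = deg e b -> ~ path3 e a b) ->
  repeated_deg e beta ->
  (forall d, repeated_deg e d -> d <= beta) ->
  max_deg e - 1 <= beta \/ max_deg e <= n + 2.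
Proof.
move=> n6 sg cardT Eb noP rep maxrep.
have [sym irr] := sg.
set D := max_deg e.
have degle : forall x, deg e x <= D := fun x => leq_bigmax x.
have [v0 _] := rep.
have [v degv] : exists v, deg e v = D.
  by exists [arg max_(i > v0 | true) deg e i]; rewrite /D /max_deg (bigmax_eq_arg v0).
case: (leqP (D - 1) beta) => [hb|hb]; first by left.
right; rewrite leqNgt; apply/negP => hD.
have top : forall u, u != v -> deg e u < D.
  move=> u uv; rewrite ltn_neqAle degle andbT; apply/eqP => du.
  have : D <= beta by apply: maxrep; exists u, v; rewrite uv du degv.
  lia.
have degT : forall x, deg e x <= #|T| - 1.
  move=> x; rewrite /deg subn1 -(cardsC1 x); apply: subset_leq_card; apply/subsetP => y.
  rewrite !inE; apply: contraTneq => ->; by rewrite irr.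
set Non := ~: [set y | e v y].
have cNon : #|Non| = 2 * n - D.
  by rewrite -cardT -(cardsC [set y | e v y]) -/Non /deg -degv /deg; lia.
have vNon : v \in Non by rewrite !inE irr.
have key : forall a b, a != b -> a != v -> e v b -> deg e a = deg e b ->
    deg e a <= #|Non| + 1.
  move=> a b ab av evb dab.
  apply: leq_trans (_ : #|b |: Non| <= _); last by rewrite cardsU1 addnC leq_add2l leq_b1.
  apply: subset_leq_card; apply/subsetP => y; rewrite !inE => eay.
  case: (boolP (e v y)) => evy; rewrite ?orbT // orbF; apply/negPn/negP => yb; exfalso.
  apply: (noP a b ab dab); exists y, v; rewrite /= !inE !negb_or.
  rewrite eay sym evy evb ab av yb !andbT.
  split=> //; apply/and3P; split; apply/negP => /eqP E.
  - by move: eay; rewrite E irr.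
  - by move: evy; rewrite E irr.
  - by move: evb; rewrite E irr.

set L := #|Non| + 1.
set Pw := fun u => e v u || (beta < deg e u).
set W := [set u | (u != v) && Pw u].
set Ml := [set u | (u != v) && ~~ Pw u].
set W' := [set u in W | L < deg e u].
have split : forall F : T -> nat,
    \sum_x F x = F v + \sum_(x in W) F x + \sum_(x in Ml) F x.
  move=> F; rewrite (bigD1 v) //= (bigID Pw) /= addnA; congr (_ + _ + _).
    by apply: eq_bigl => x; rewrite !inE.
  by apply: eq_bigl => x; rewrite !inE.
have cardWM : #|W| + #|Ml| = 2 * n - 1.
  have := split (fun _ => 1); rewrite !sum1_card cardT; lia.
have cMl : #|Ml| <= #|Non| - 1.
  rewrite (cardsD1 v Non) vNon add1n subn1 /=.
  apply: subset_leq_card; apply/subsetP => x; rewrite !inE => /andP[xv].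
  by rewrite /Pw negb_or => /andP[-> _]; rewrite xv.
have SMb : \sum_(x in Ml) deg e x <= #|Ml| * beta.
  rewrite -sum_nat_const; apply: leq_sum => x; rewrite !inE => /andP[_].
  by rewrite /Pw negb_or -leqNgt => /andP[_].
have SWb : \sum_(x in W) deg e x <= #|W| * L + \sum_(x in W') (deg e x - L).
  have -> : \sum_(x in W') (deg e x - L) = \sum_(x in W) (deg e x - L).
    rewrite big_mkcond /= [RHS]big_mkcond /=; apply: eq_bigr => x _.
    rewrite [x \in W']inE; case: (x \in W) => //=; case: ltnP => //= h.
    by apply/esym/eqP; rewrite subn_eq0.
  rewrite -sum_nat_const -big_split /=; apply: leq_sum => x _; lia.
have inj : {in W' &, injective (fun x => deg e x - L)}.
  move=> x y; rewrite !inE /Pw => /andP[/andP[xv Px] Lx] /andP[/andP[yv Py] Ly] dxy.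
  have dxy' : deg e x = deg e y by lia.
  apply/eqP; apply/negPn/negP => xy.
  case: (boolP (e v y)) => evy.
    by have := key x y xy xv evy dxy'; rewrite /L in Lx; lia.
  case: (boolP (e v x)) => evx.
    have yx : y != x by rewrite eq_sym.
    by have := key y x yx yv evx (esym dxy'); rewrite /L in Ly; lia.
  move: Px Py; rewrite (negbTE evx) (negbTE evy) /= => bx by_.
  have : deg e x <= beta by apply: maxrep; exists x, y; rewrite xy dxy'.
  lia.
have Xb : 2 * \sum_(x in W') (deg e x - L) <= (D - 1 - L) * (D - 1 - L).+1.
  have -> : \sum_(x in W') (deg e x - L) = sumn (map (fun x => deg e x - L) (enum W')).
    by rewrite sumnE big_map big_enum.
  apply: sumn_uniq_bound.
    by rewrite (map_inj_in_uniq (s := enum W')) ?enum_uniq // => x y; rewrite !mem_enum; apply: inj.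
  apply/allP => z /mapP[x]; rewrite mem_enum !inE => /andP[/andP[xv _] _] ->.
  have := top x xv; lia.
have hs := @handshake T e sg.
rewrite (split (deg e)) degv in hs.
have := degT v; rewrite degv cardT => Dle.
exact: (arith n6 Eb hs SWb Xb SMb cMl cardWM erefl cNon hb hD Dle).
Qed.
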